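(* Suppose that for every metric space $M$ and every point $s\in M$ there exists a competitive deterministic online algorithm for the infinite server problem on $(M,s)$. Then there exists a universal constant $\rho$ such that for every metric space $M$ and every $s\in M$ the infinite server problem on $(M,s)$ admits a strictly $\rho$-competitive deterministic online algorithm.
   Context: Infinite server problem on $(M,s)$: $M$ is a metric space with metric $d$ and $s\in M$ is the source. An unbounded number of servers initially reside at $s$. A finite sequence of requests (points of $M$) is revealed one by one; each request must be served immediately, before the next one is revealed, by moving some server to the requested point. The cost is the total distance traveled by all servers. For an algorithm $ALG$ and request sequence $\sigma$, $ALG(\sigma)$ denotes its cost and $OPT(\sigma)$ the optimal offline cost. An online algorithm is $\rho$-competitive ($\rho\ge1$) if there is a constant $c$ independent of $\sigma$ with $ALG(\sigma)\le\rho\, OPT(\sigma)+c$ for all $\sigma$; it is strictly $\rho$-competitive if this holds with $c=0$. An algorithm is competitive if it is $\rho$-competitive for some $\rho$. *)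

(* Defs.v *)
From Stdlib Require Import Reals List.
Import ListNotations.
Open Scope R_scope.

Section InfiniteServer.
Variable M : Metric_Space.
Notation P := (Base M).
Notation d := (dist M).

(* Servers are indexed by [nat] (unboundedly many); a configuration gives the
   position of every server. *)
Definition config := nat -> P.

Definition init_config (s : P) : config := fun _ => s.

Definition move := (nat * P)%type.

Definition upd (c : config) (i : nat) (x : P) : config :=
  fun j => if Nat.eqb j i then x else c j.

Fixpoint exec (c : config) (ms : list move) : config * R :=
  match ms with
  | [] => (c, 0)
  | (i, x) :: ms' =>
      let r := exec (upd c i x) ms' in (fst r, d (c i) x + snd r)
  end.

Definition served (c : config) (x : P) : Prop := exists i, c i = x.

(* A deterministic online algorithm: given the past requests (in order) and
   the current request, it chooses the moves to perform now. *)
Definition online_alg := list P -> P -> list move.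

Fixpoint alg_valid_from (A : online_alg) (hist : list P) (c : config)
    (sigma : list P) : Prop :=
  match sigma with
  | [] => True
  | r :: sigma' =>
      let c' := fst (exec c (A hist r)) in
      served c' r /\ alg_valid_from A (hist ++ [r]) c' sigma'
  end.

Fixpoint alg_cost_from (A : online_alg) (hist : list P) (c : config)
    (sigma : list P) : R :=
  match sigma with
  | [] => 0
  | r :: sigma' =>
      let e := exec c (A hist r) in
      snd e + alg_cost_from A (hist ++ [r]) (fst e) sigma'
  end.

(* The algorithm serves every request sequence (each request served
   immediately, before the next one is revealed). *)
Definition serves_all (s : P) (A : online_alg) : Prop :=
  forall sigma, alg_valid_from A [] (init_config s) sigma.

Definition alg_cost (s : P) (A : online_alg) (sigma : list P) : R :=
  alg_cost_from A [] (init_config s) sigma.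

(* An offline schedule: one list of moves per request, chosen knowing the
   whole sequence. *)
Fixpoint sched_valid (c : config) (sigma : list P) (S : list (list move))
    : Prop :=
  match sigma, S with
  | [], [] => True
  | r :: sigma', m :: S' =>
      let c' := fst (exec c m) in served c' r /\ sched_valid c' sigma' S'
  | _, _ => False
  end.

Fixpoint sched_cost (c : config) (S : list (list move)) : R :=
  match S with
  | [] => 0
  | m :: S' => let e := exec c m in snd e + sched_cost (fst e) S'
  end.

(* ALG(sigma) <= rho * OPT(sigma) + c, where OPT(sigma) is the infimum of the
   costs of all valid offline schedules; since rho >= 0 this is equivalent to
   the bound holding against every valid offline schedule. *)
Definition bounded_by (s : P) (A : online_alg) (rho cst : R) : Prop :=
  forall (sigma : list P) (S : list (list move)),
    sched_valid (init_config s) sigma S ->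
    alg_cost s A sigma <= rho * sched_cost (init_config s) S + cst.

Definition rho_competitive (s : P) (A : online_alg) (rho : R) : Prop :=
  1 <= rho /\ exists cst : R, bounded_by s A rho cst.

Definition strictly_rho_competitive (s : P) (A : online_alg) (rho : R) : Prop :=
  1 <= rho /\ bounded_by s A rho 0.

Definition competitive (s : P) (A : online_alg) : Prop :=
  exists rho : R, rho_competitive s A rho.

End InfiniteServer.

(* Main.v *)
Require Import Defs.
From Stdlib Require Import Reals List Lra Lia ZArith FunctionalExtensionality ProofIrrelevance ClassicalEpsilon Classical Eqdep_dec.
Import ListNotations.
Open Scope R_scope.

Lemma exec_nonneg (M : Metric_Space) c ms : 0 <= snd (exec M c ms).
Proof.
  revert c; induction ms as [|[i x] ms IH]; intros c; simpl; [lra|].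
  pose proof (dist_pos M (c i) x); specialize (IH (upd M c i x)); lra.
Qed.

Lemma exec_dist (M : Metric_Space) c ms i :
  dist M (c i) (fst (exec M c ms) i) <= snd (exec M c ms).
Proof.
  revert c; induction ms as [|[j x] ms IH]; intros c; simpl.
  - rewrite (proj2 (dist_refl M _ _) eq_refl); lra.
  - specialize (IH (upd M c j x)).
    unfold upd in IH at 1.
    destruct (Nat.eqb i j) eqn:E.
    + apply Nat.eqb_eq in E; subst.
      pose proof (dist_tri M (c j) (fst (exec M (upd M c j x) ms) j) x). lra.
    + pose proof (dist_pos M (c j) x). lra.
Qed.

Lemma sched_cost_nonneg (M : Metric_Space) c S : 0 <= sched_cost M c S.
Proof.
  revert c; induction S as [|m S IH]; intros c; simpl; [lra|].
  pose proof (exec_nonneg M c m); specialize (IH (fst (exec M c m))); lra.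
Qed.

Lemma exec_app (M : Metric_Space) c m1 m2 :
  exec M c (m1 ++ m2) =
  (fst (exec M (fst (exec M c m1)) m2),
   snd (exec M c m1) + snd (exec M (fst (exec M c m1)) m2)).
Proof.
  revert c; induction m1 as [|[i x] m1 IH]; intros c; simpl.
  - destruct (exec M c m2); simpl; f_equal; ring.
  - rewrite IH; simpl; f_equal; ring.
Qed.

Definition fmove {M1 M2 : Metric_Space} (f : Base M1 -> Base M2) (mv : move M1) : move M2 :=
  (fst mv, f (snd mv)).
Arguments fmove : simpl never.
Lemma map_fmove_cons {M1 M2 : Metric_Space} (f : Base M1 -> Base M2) (mv : move M1) ms :
  map (fmove f) (mv :: ms) = (fst mv, f (snd mv)) :: map (fmove f) ms.
Proof. reflexivity. Qed.

Lemma upd_comp (M1 M2 : Metric_Space) (f : Base M1 -> Base M2) c i x :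
  upd M2 (fun k => f (c k)) i (f x) = (fun k => f (upd M1 c i x k)).
Proof. extensionality k; unfold upd; destruct (Nat.eqb k i); reflexivity. Qed.

Lemma exec_map_fst (M1 M2 : Metric_Space) (f : Base M1 -> Base M2) c ms :
  fst (exec M2 (fun k => f (c k)) (map (fmove f) ms)) = (fun k => f (fst (exec M1 c ms) k)).
Proof.
  revert c; induction ms as [|[i x] ms IH]; intros c; [reflexivity|].
  rewrite map_fmove_cons; simpl. rewrite upd_comp. apply IH.
Qed.

Lemma exec_map_snd_le (M1 M2 : Metric_Space) (f : Base M1 -> Base M2)
  (Hf : forall x y, dist M2 (f x) (f y) <= dist M1 x y) c ms :
  snd (exec M2 (fun k => f (c k)) (map (fmove f) ms)) <= snd (exec M1 c ms).
Proof.
  revert c; induction ms as [|[i x] ms IH]; intros c; [simpl; lra|].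
  rewrite map_fmove_cons; simpl. rewrite upd_comp.
  specialize (IH (upd M1 c i x)). specialize (Hf (c i) x). lra.
Qed.

Lemma exec_map_snd_eq (M1 M2 : Metric_Space) (f : Base M1 -> Base M2)
  (Hf : forall x y, dist M2 (f x) (f y) = dist M1 x y) c ms :
  snd (exec M2 (fun k => f (c k)) (map (fmove f) ms)) = snd (exec M1 c ms).
Proof.
  revert c; induction ms as [|[i x] ms IH]; intros c; [simpl; lra|].
  rewrite map_fmove_cons; simpl. rewrite upd_comp.
  specialize (IH (upd M1 c i x)). specialize (Hf (c i) x). lra.
Qed.
Section Scale.
Variable M : Metric_Space.
Variable l : R.
Hypothesis hl : 0 < l.

Definition scaleM : Metric_Space.
Proof.
  refine (Build_Metric_Space (Base M) (fun x y => l * dist M x y) _ _ _ _).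
  - intros x y. pose proof (dist_pos M x y). nra.
  - intros x y. rewrite dist_sym. reflexivity.
  - intros x y. split.
    + intros H. apply (dist_refl M). apply Rmult_integral in H. destruct H; [lra|auto].
    + intros H. apply (dist_refl M) in H. rewrite H. ring.
  - intros x y z. pose proof (dist_tri M x y z). nra.
Defined.

Lemma exec_scale c ms :
  exec scaleM c ms = (fst (exec M c ms), l * snd (exec M c ms)).
Proof.
  revert c; induction ms as [|[i x] ms IH]; intros c; simpl.
  - f_equal; ring.
  - change (upd scaleM c i x) with (upd M c i x). rewrite IH. simpl. f_equal. ring.
Qed.

Lemma valid_scale A hist c sigma :
  alg_valid_from scaleM A hist c sigma <-> alg_valid_from M A hist c sigma.
Proof.
  revert hist c; induction sigma as [|r sigma IH]; intros hist c; simpl; [tauto|].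
  rewrite exec_scale; simpl. rewrite IH. unfold served. tauto.
Qed.

Lemma cost_scale A hist c sigma :
  alg_cost_from scaleM A hist c sigma = l * alg_cost_from M A hist c sigma.
Proof.
  revert hist c; induction sigma as [|r sigma IH]; intros hist c; simpl; [ring|].
  rewrite exec_scale; simpl. rewrite IH. ring.
Qed.

Lemma sched_valid_scale c sigma S :
  sched_valid M c sigma S -> sched_valid scaleM c sigma S.
Proof.
  revert c S; induction sigma as [|r sigma IH]; intros c S; destruct S as [|m S]; simpl; auto.
  rewrite exec_scale; simpl. intros [H1 H2]; split; auto.
Qed.

Lemma sched_cost_scale c S :
  sched_cost scaleM c S = l * sched_cost M c S.
Proof.
  revert c; induction S as [|m S IH]; intros c; simpl; [ring|].
  rewrite exec_scale; simpl. rewrite IH. ring.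
Qed.

Lemma unscale (s : Base M) (A : online_alg M) rho cst :
  serves_all scaleM s A -> bounded_by scaleM s A rho cst ->
  serves_all M s A /\
  forall sigma S, sched_valid M (init_config M s) sigma S ->
    alg_cost M s A sigma <= rho * sched_cost M (init_config M s) S + cst / l.
Proof.
  intros Hs Hb. split.
  - intros sigma. apply (proj1 (valid_scale A [] _ sigma)). apply Hs.
  - intros sigma S HS. pose proof (Hb sigma S (sched_valid_scale _ _ _ HS)) as H.
    unfold alg_cost in *. rewrite cost_scale in H.
    change (init_config scaleM s) with (init_config M s) in H.
    rewrite sched_cost_scale in H.
    apply Rmult_le_reg_l with l; [lra|].
    replace (l * (rho * sched_cost M (init_config M s) S + cst / l))
      with (rho * (l * sched_cost M (init_config M s) S) + cst) by (field; lra).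
    exact H.
Qed.
End Scale.
Section Strict.
Variable M : Metric_Space.
Variable s : Base M.
Variable Af : nat -> online_alg M.
Variables rho cst : R.
Hypothesis hrho : 0 <= rho.
Hypothesis Hserv : forall k, serves_all M s (Af k).
Hypothesis Hbound : forall k sigma S, sched_valid M (init_config M s) sigma S ->
  alg_cost M s (Af k) sigma <= rho * sched_cost M (init_config M s) S + cst / (INR k + 1).

Definition isS (x : Base M) : bool := if Req_EM_T (dist M x s) 0 then true else false.

Lemma isS_true x : isS x = true -> x = s.
Proof. unfold isS; destruct Req_EM_T as [e|n]; [|discriminate]. intros _. apply (dist_refl M); auto. Qed.

Lemma isS_false x : isS x = false -> 0 < dist M x s.
Proof. unfold isS; destruct Req_EM_T as [e|n]; [discriminate|]. intros _.
  pose proof (dist_pos M x s). lra. Qed.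

Fixpoint first_non (l : list (Base M)) : option (Base M) :=
  match l with [] => None | x :: l' => if isS x then first_non l' else Some x end.

Fixpoint drop_s (l : list (Base M)) : list (Base M) :=
  match l with [] => [] | x :: l' => if isS x then drop_s l' else l end.

Definition kof (x : Base M) : nat := Z.to_nat (up (Rabs cst / dist M x s)).

Definition B : online_alg M := fun hist r =>
  match first_non (hist ++ [r]) with
  | None => []
  | Some x => Af (kof x) (drop_s hist) r
  end.

Lemma first_non_app_None h l : first_non h = None -> first_non (h ++ l) = first_non l.
Proof. induction h as [|x h IH]; simpl; auto. destruct (isS x); auto. discriminate. Qed.

Lemma first_non_app_Some h l x : first_non h = Some x -> first_non (h ++ l) = Some x.
Proof. induction h as [|y h IH]; simpl; [discriminate|]. destruct (isS y); auto. Qed.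

Lemma drop_s_app_None h l : first_non h = None -> drop_s (h ++ l) = drop_s l.
Proof. induction h as [|x h IH]; simpl; auto. destruct (isS x); auto. discriminate. Qed.

Lemma drop_s_None h : first_non h = None -> drop_s h = [].
Proof. induction h as [|x h IH]; simpl; auto. destruct (isS x); auto. discriminate. Qed.

Lemma drop_s_app_Some h l x : first_non h = Some x -> drop_s (h ++ l) = drop_s h ++ l.
Proof. induction h as [|y h IH]; simpl; [discriminate|]. destruct (isS y); auto. Qed.

Lemma first_non_drop l x : first_non l = Some x -> exists rest, drop_s l = x :: rest /\ isS x = false.
Proof.
  induction l as [|y l IH]; simpl; [discriminate|].
  destruct (isS y) eqn:E; auto. intros H; inversion H; subst. eauto.
Qed.

Lemma run_after x : forall sigma hist c, first_non hist = Some x ->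
  alg_cost_from M B hist c sigma = alg_cost_from M (Af (kof x)) (drop_s hist) c sigma /\
  (alg_valid_from M (Af (kof x)) (drop_s hist) c sigma -> alg_valid_from M B hist c sigma).
Proof.
  induction sigma as [|r sigma IH]; intros hist c Hh; simpl; [tauto|].
  assert (HB : B hist r = Af (kof x) (drop_s hist) r).
  { unfold B. rewrite (first_non_app_Some _ _ _ Hh). reflexivity. }
  rewrite HB.
  assert (Hh' : first_non (hist ++ [r]) = Some x) by (apply first_non_app_Some; auto).
  destruct (IH (hist ++ [r]) (fst (exec M c (Af (kof x) (drop_s hist) r))) Hh') as [IH1 IH2].
  rewrite (drop_s_app_Some _ _ _ Hh) in IH1, IH2.
  rewrite IH1. split; [reflexivity|]. intros [H1 H2]; split; auto.
Qed.

Lemma run_pre : forall sigma hist, first_non hist = None ->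
  (alg_cost_from M B hist (init_config M s) sigma =
     match first_non sigma with None => 0
     | Some x => alg_cost_from M (Af (kof x)) [] (init_config M s) (drop_s sigma) end) /\
  (match first_non sigma with None => True
     | Some x => alg_valid_from M (Af (kof x)) [] (init_config M s) (drop_s sigma) end ->
   alg_valid_from M B hist (init_config M s) sigma).
Proof.
  induction sigma as [|r sigma IH]; intros hist Hh; simpl; [tauto|].
  destruct (isS r) eqn:Er.
  - assert (HB : B hist r = []).
    { unfold B. rewrite (first_non_app_None _ _ Hh). simpl. rewrite Er. reflexivity. }
    rewrite HB. simpl.
    assert (Hh' : first_non (hist ++ [r]) = None).
    { rewrite (first_non_app_None _ _ Hh). simpl. rewrite Er. reflexivity. }
    destruct (IH _ Hh') as [IH1 IH2]. rewrite IH1. split; [ring|].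
    intros H; split; auto. exists O. unfold init_config. symmetry. apply isS_true; auto.
  - assert (HB : B hist r = Af (kof r) [] r).
    { unfold B. rewrite (first_non_app_None _ _ Hh). simpl. rewrite Er.
      rewrite (drop_s_None hist Hh). reflexivity. }
    rewrite HB. simpl.
    assert (Hh' : first_non (hist ++ [r]) = Some r).
    { rewrite (first_non_app_None _ _ Hh). simpl. rewrite Er. reflexivity. }
    destruct (run_after r sigma (hist ++ [r]) (fst (exec M (init_config M s) (Af (kof r) [] r))) Hh')
      as [H1 H2].
    rewrite (drop_s_app_None _ _ Hh) in H1, H2. simpl in H1, H2. rewrite Er in H1, H2.
    simpl. rewrite H1. split; [reflexivity|]. intros [Ha Hb]; split; auto.
Qed.

Lemma sched_drop x : forall sigma c S, sched_valid M c sigma S -> first_non sigma = Some x ->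
  exists S', sched_valid M c (drop_s sigma) S' /\ sched_cost M c S' = sched_cost M c S.
Proof.
  induction sigma as [|r sigma IH]; intros c S HS Hf; simpl in Hf; [discriminate|].
  destruct S as [|m S]; [simpl in HS; contradiction|].
  simpl. destruct (isS r) eqn:Er.
  - destruct HS as [_ HS].
    destruct (IH _ _ HS Hf) as [S' [HS' HC]].
    destruct (first_non_drop _ _ Hf) as [rest [Hd _]].
    rewrite Hd in HS' |- *.
    destruct S' as [|m2 S3]; [simpl in HS'; contradiction|].
    exists ((m ++ m2) :: S3). simpl. rewrite exec_app. simpl.
    simpl in HS'. split; [exact HS'|].
    simpl in HC. rewrite <- HC. ring.
  - exists (m :: S). split; [exact HS|reflexivity].
Qed.

Lemma sched_lower x rest S : sched_valid M (init_config M s) (x :: rest) S ->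
  dist M s x <= sched_cost M (init_config M s) S.
Proof.
  destruct S as [|m S]; simpl; [contradiction|].
  intros [[i Hi] _].
  pose proof (exec_dist M (init_config M s) m i) as H. rewrite Hi in H.
  unfold init_config in H at 1.
  pose proof (sched_cost_nonneg M (fst (exec M (init_config M s) m)) S). lra.
Qed.

Lemma kof_spec x : 0 < dist M x s -> cst / (INR (kof x) + 1) <= dist M x s.
Proof.
  intros Hd. unfold kof. set (y := Rabs cst / dist M x s).
  assert (Hy : 0 <= y) by (unfold y; unfold Rdiv; apply Rmult_le_pos; [apply Rabs_pos|left; apply Rinv_0_lt_compat; lra]).
  destruct (archimed y) as [H1 _].
  assert (Hz : (0 < up y)%Z) by (apply lt_0_IZR; lra).
  rewrite INR_IZR_INZ, Z2Nat.id by lia.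
  assert (Hk : 0 < IZR (up y) + 1) by lra.
  apply Rle_trans with (Rabs cst / (IZR (up y) + 1)).
  { unfold Rdiv. apply Rmult_le_compat_r; [left; apply Rinv_0_lt_compat; lra| apply Rle_abs]. }
  apply (Rmult_le_reg_r (IZR (up y) + 1)); [lra|].
  unfold Rdiv. rewrite Rmult_assoc, Rinv_l by lra. rewrite Rmult_1_r.
  unfold y in *. unfold Rdiv in *.
  assert (Rabs cst = Rabs cst * / dist M x s * dist M x s) by (field; lra).
  pose proof (Rabs_pos cst).
  assert (0 <= (IZR (up (Rabs cst * / dist M x s)) - Rabs cst * / dist M x s) * dist M x s) by (apply Rmult_le_pos; lra).
  nra.
Qed.

Lemma strictify : serves_all M s B /\ bounded_by M s B (rho + 1) 0.
Proof.
  split.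
  - intros sigma. destruct (run_pre sigma [] eq_refl) as [_ H]. apply H.
    destruct (first_non sigma); auto. apply Hserv.
  - intros sigma S HS. unfold alg_cost. destruct (run_pre sigma [] eq_refl) as [H _].
    rewrite H. pose proof (sched_cost_nonneg M (init_config M s) S) as Hnn.
    destruct (first_non sigma) as [x|] eqn:Ef; [|nra].
    destruct (sched_drop x sigma _ S HS Ef) as [S' [HS' HC]].
    destruct (first_non_drop _ _ Ef) as [rest [Hd Hx]].
    pose proof (Hbound (kof x) _ _ HS') as Hb. unfold alg_cost in Hb.
    rewrite Hd in HS'. pose proof (sched_lower x rest S' HS') as Hl.
    apply isS_false in Hx. pose proof (kof_spec x Hx) as Hk.
    rewrite dist_sym in Hl. rewrite HC in Hb, Hl. nra.
Qed.
End Strict.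
Definition eqdec : forall a b : nat * nat, {a = b} + {a <> b}.
Proof. decide equality; apply Nat.eq_dec. Defined.

Section Wedge.
Variable F : nat * nat -> Metric_Space.
Variable src : forall i, Base (F i).

Definition Wpt := option {i : nat * nat & {x : Base (F i) | x <> src i}}.

Definition castF {i j : nat * nat} (e : i = j) (x : Base (F i)) : Base (F j) :=
  eq_rect i (fun k => Base (F k)) x j e.

Definition dW (p q : Wpt) : R :=
  match p, q with
  | None, None => 0
  | None, Some (existT _ j (exist _ y _)) => dist (F j) (src j) y
  | Some (existT _ i (exist _ x _)), None => dist (F i) x (src i)
  | Some (existT _ i (exist _ x _)), Some (existT _ j (exist _ y _)) =>
      match eqdec i j with
      | left e => dist (F j) (castF e x) y
      | right _ => dist (F i) x (src i) + dist (F j) (src j) y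
      end
  end.

Definition hW (p : Wpt) : R := dW None p.

Definition compat (i : nat * nat) (p : Wpt) : Prop :=
  match p with None => True | Some (existT _ j _) => j = i end.

Definition piW (i : nat * nat) (p : Wpt) : Base (F i) :=
  match p with
  | None => src i
  | Some (existT _ j (exist _ y _)) =>
      match eqdec j i with left e => castF e y | right _ => src i end
  end.

Lemma dist0 (M : Metric_Space) (x : Base M) : dist M x x = 0.
Proof. apply (dist_refl M); reflexivity. Qed.

Lemma dW_compat i p q : compat i p -> compat i q -> dW p q = dist (F i) (piW i p) (piW i q).
Proof.
  destruct p as [[j [x hx]]|]; destruct q as [[k [y hy]]|]; simpl; intros Hp Hq; subst.
  - destruct (eqdec i i) as [e|n]; [|contradiction].
    rewrite (UIP_dec eqdec e eq_refl). reflexivity.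
  - destruct (eqdec i i) as [e|n]; [|contradiction].
    rewrite (UIP_dec eqdec e eq_refl). reflexivity.
  - destruct (eqdec i i) as [e|n]; [|contradiction].
    rewrite (UIP_dec eqdec e eq_refl). reflexivity.
  - symmetry; apply dist0.
Qed.

Lemma hW_compat i p : compat i p -> hW p = dist (F i) (src i) (piW i p).
Proof. intros H. unfold hW. rewrite (dW_compat i); simpl; auto. Qed.

Lemma hW_None : hW None = 0.
Proof. reflexivity. Qed.

Lemma compat_ex p : exists i, compat i p.
Proof. destruct p as [[j [x hx]]|]; simpl; [exists j; reflexivity| exists (0,0)%nat; exact I]. Qed.

Lemma hW_pos p : 0 <= hW p.
Proof. destruct (compat_ex p) as [i Hi]. rewrite (hW_compat i p Hi).
  pose proof (dist_pos (F i) (src i) (piW i p)). lra. Qed.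

Lemma piW_incompat i q : ~ compat i q -> piW i q = src i.
Proof.
  destruct q as [[k [y hy]]|]; simpl; intros H; [|reflexivity].
  destruct (eqdec k i); [contradiction|reflexivity].
Qed.

Lemma dW_incompat i p q : compat i p -> ~ compat i q -> dW p q = hW p + hW q.
Proof.
  destruct p as [[j [x hx]]|]; destruct q as [[k [y hy]]|]; simpl; intros Hp Hq;
    try contradiction; unfold hW; simpl.
  - subst. destruct (eqdec i k) as [e|n]; [subst; contradiction|].
    rewrite (dist_sym (F i) x). reflexivity.
  - ring.
Qed.

Lemma dW_incompat' i p q : compat i p -> ~ compat i q -> dW q p = hW q + hW p.
Proof.
  destruct p as [[j [x hx]]|]; destruct q as [[k [y hy]]|]; simpl; intros Hp Hq;
    try contradiction; unfold hW; simpl.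
  - subst. destruct (eqdec k i) as [e|n]; [subst; contradiction|].
    rewrite (dist_sym (F k) y). reflexivity.
  - rewrite dist_sym; ring.
Qed.

Lemma dW_le_h p q : dW p q <= hW p + hW q.
Proof.
  destruct (compat_ex p) as [i Hi].
  destruct (classic (compat i q)) as [Hq|Hq].
  - rewrite (dW_compat i p q Hi Hq), (hW_compat i p Hi), (hW_compat i q Hq).
    rewrite (dist_sym (F i) (src i) (piW i p)). apply dist_tri.
  - rewrite (dW_incompat i p q Hi Hq). lra.
Qed.

Lemma dW_sym p q : dW p q = dW q p.
Proof.
  destruct (compat_ex p) as [i Hi].
  destruct (classic (compat i q)) as [Hq|Hq].
  - rewrite (dW_compat i p q Hi Hq), (dW_compat i q p Hq Hi). apply dist_sym.
  - rewrite (dW_incompat i p q Hi Hq), (dW_incompat' i p q Hi Hq). ring.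
Qed.

Lemma dW_ge_h p q : hW q - hW p <= dW p q.
Proof.
  destruct (compat_ex p) as [i Hi].
  destruct (classic (compat i q)) as [Hq|Hq].
  - rewrite (dW_compat i p q Hi Hq), (hW_compat i p Hi), (hW_compat i q Hq).
    pose proof (dist_tri (F i) (src i) (piW i q) (piW i p)). lra.
  - rewrite (dW_incompat i p q Hi Hq). pose proof (hW_pos p). lra.
Qed.

Lemma dW_pos p q : dW p q >= 0.
Proof.
  destruct (compat_ex p) as [i Hi].
  destruct (classic (compat i q)) as [Hq|Hq].
  - rewrite (dW_compat i p q Hi Hq). apply dist_pos.
  - rewrite (dW_incompat i p q Hi Hq). pose proof (hW_pos p); pose proof (hW_pos q). lra.
Qed.

Lemma dW_tri p q z : dW p q <= dW p z + dW z q.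
Proof.
  destruct (compat_ex p) as [i Hi].
  destruct (classic (compat i q)) as [Hq|Hq].
  - destruct (classic (compat i z)) as [Hz|Hz].
    + rewrite (dW_compat i p q Hi Hq), (dW_compat i p z Hi Hz), (dW_compat i z q Hz Hq).
      apply dist_tri.
    + rewrite (dW_incompat i p z Hi Hz), (dW_incompat' i q z Hq Hz).
      pose proof (dW_le_h p q); pose proof (hW_pos z). lra.
  - rewrite (dW_incompat i p q Hi Hq).
    destruct (classic (compat i z)) as [Hz|Hz].
    +
      rewrite (dW_incompat i z q Hz Hq).
      pose proof (dW_ge_h z p) as Hg. rewrite (dW_sym z p) in Hg. lra.
    + rewrite (dW_incompat i p z Hi Hz).
      pose proof (dW_ge_h z q). lra.
Qed.

Lemma piW_inj i p q : compat i p -> compat i q -> piW i p = piW i q -> p = q.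
Proof.
  destruct p as [[j [x hx]]|]; destruct q as [[k [y hy]]|]; simpl; intros Hp Hq; subst;
    try (destruct (eqdec i i) as [e|n]; [|contradiction];
         rewrite (UIP_dec eqdec e eq_refl); simpl); intros H.
  - subst. f_equal. f_equal. f_equal. apply proof_irrelevance.
  - contradiction.
  - symmetry in H; contradiction.
  - reflexivity.
Qed.

Lemma dW_refl p q : dW p q = 0 <-> p = q.
Proof.
  split.
  - intros H. destruct (compat_ex p) as [i Hi].
    destruct (classic (compat i q)) as [Hq|Hq].
    + rewrite (dW_compat i p q Hi Hq) in H. apply (dist_refl (F i)) in H.
      apply (piW_inj i); auto.
    + rewrite (dW_incompat i p q Hi Hq) in H.
      pose proof (hW_pos p); pose proof (hW_pos q).
      assert (Hq0 : hW q = 0) by lra.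
      destruct q as [[k [y hy]]|]; [|simpl in Hq; tauto].
      unfold hW in Hq0; simpl in Hq0. apply (dist_refl (F k)) in Hq0. symmetry in Hq0; contradiction.
  - intros <-. destruct (compat_ex p) as [i Hi]. rewrite (dW_compat i p p Hi Hi). apply dist0.
Qed.

Definition Wspace : Metric_Space :=
  Build_Metric_Space Wpt dW dW_pos dW_sym dW_refl dW_tri.

Lemma neq_src i x : dist (F i) x (src i) <> 0 -> x <> src i.
Proof. intros H E. apply H. apply (dist_refl (F i)). exact E. Qed.

Definition eW (i : nat * nat) (x : Base (F i)) : Wpt :=
  match Req_EM_T (dist (F i) x (src i)) 0 with
  | left _ => None
  | right n => Some (existT _ i (exist _ x (neq_src i x n)))
  end.

Lemma eW_compat i x : compat i (eW i x).
Proof. unfold eW. destruct Req_EM_T; simpl; auto. Qed.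

Lemma piW_eW i x : piW i (eW i x) = x.
Proof.
  unfold eW. destruct Req_EM_T as [e|n]; simpl.
  - symmetry. apply (dist_refl (F i)). exact e.
  - destruct (eqdec i i) as [e|n']; [|contradiction].
    rewrite (UIP_dec eqdec e eq_refl). reflexivity.
Qed.

Lemma eW_src i : eW i (src i) = None.
Proof. unfold eW. destruct Req_EM_T as [e|n]; [reflexivity|]. exfalso; apply n, dist0. Qed.

Lemma eW_iso i x y : dist Wspace (eW i x) (eW i y) = dist (F i) x y.
Proof.
  change (dW (eW i x) (eW i y) = dist (F i) x y).
  rewrite (dW_compat i _ _ (eW_compat i x) (eW_compat i y)), !piW_eW. reflexivity.
Qed.

Lemma piW_lip i p q : dist (F i) (piW i p) (piW i q) <= dist Wspace p q.
Proof.
  change (dist (F i) (piW i p) (piW i q) <= dW p q).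
  destruct (classic (compat i p)) as [Hp|Hp]; destruct (classic (compat i q)) as [Hq|Hq].
  - rewrite (dW_compat i p q Hp Hq). lra.
  - rewrite (dW_incompat i p q Hp Hq), (piW_incompat i q Hq), (hW_compat i p Hp), dist_sym.
    pose proof (hW_pos q). lra.
  - rewrite dW_sym, (dW_incompat i q p Hq Hp), (piW_incompat i p Hp), (hW_compat i q Hq).
    pose proof (hW_pos p). lra.
  - rewrite (piW_incompat i p Hp), (piW_incompat i q Hq), dist0.
    pose proof (dW_pos p q). lra.
Qed.

Section Restrict.
Variable A : online_alg Wspace.
Variable i : nat * nat.

Definition Ai : online_alg (F i) := fun hist r =>
  map (@fmove Wspace (F i) (piW i)) (A (map (eW i) hist) (eW i r)).

Lemma Ai_eq hist r : Ai hist r = map (@fmove Wspace (F i) (piW i)) (A (map (eW i) hist) (eW i r)).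
Proof. reflexivity. Qed.

Lemma run_restrict : forall sigma hist (c : config Wspace),
  alg_cost_from (F i) Ai hist (fun k => piW i (c k)) sigma <=
    alg_cost_from Wspace A (map (eW i) hist) c (map (eW i) sigma) /\
  (alg_valid_from Wspace A (map (eW i) hist) c (map (eW i) sigma) ->
    alg_valid_from (F i) Ai hist (fun k => piW i (c k)) sigma).
Proof.
  induction sigma as [|r sigma IH]; intros hist c; simpl; [split; [lra|tauto]|].
  rewrite !Ai_eq.
  rewrite (exec_map_fst Wspace (F i) (piW i)).
  pose proof (exec_map_snd_le Wspace (F i) (piW i) (piW_lip i) c (A (map (eW i) hist) (eW i r))) as Hs.
  destruct (IH (hist ++ [r]) (fst (exec Wspace c (A (map (eW i) hist) (eW i r))))) as [IH1 IH2].
  rewrite map_app in IH1, IH2. simpl in IH1, IH2.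
  split; [lra|].
  intros [[j Hj] Hv]. split; auto.
  exists j. cbv beta. rewrite Hj. apply piW_eW.
Qed.

End Restrict.

Lemma sched_embed i : forall sigma (c : config (F i)) S,
  sched_valid (F i) c sigma S ->
  sched_valid Wspace (fun k => eW i (c k)) (map (eW i) sigma) (map (map (@fmove (F i) Wspace (eW i))) S) /\
  sched_cost Wspace (fun k => eW i (c k)) (map (map (@fmove (F i) Wspace (eW i))) S) = sched_cost (F i) c S.
Proof.
  induction sigma as [|r sigma IH]; intros c S; destruct S as [|m S]; simpl; try tauto.
  intros [[j Hj] HS].
  rewrite (exec_map_fst (F i) Wspace (eW i)).
  rewrite (exec_map_snd_eq (F i) Wspace (eW i) (eW_iso i)).
  destruct (IH _ _ HS) as [H1 H2].
  split; [split; [exists j; rewrite Hj; reflexivity| exact H1]|].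
  rewrite H2. reflexivity.
Qed.

Lemma restrict (A : online_alg Wspace) rho cst i :
  serves_all Wspace None A -> bounded_by Wspace None A rho cst ->
  serves_all (F i) (src i) (Ai A i) /\ bounded_by (F i) (src i) (Ai A i) rho cst.
Proof.
  intros Hs Hb.
  assert (Hinit : (fun k => eW i (init_config (F i) (src i) k)) = init_config Wspace None).
  { extensionality k. unfold init_config. apply eW_src. }
  split.
  - intros sigma. destruct (run_restrict A i sigma [] (init_config Wspace None)) as [_ H].
    exact (H (Hs _)).
  - intros sigma S HS. destruct (run_restrict A i sigma [] (init_config Wspace None)) as [H _].
    destruct (sched_embed i sigma _ S HS) as [H1 H2].
    rewrite Hinit in H1, H2.
    pose proof (Hb _ _ H1) as H3. unfold alg_cost in *. simpl in H.
    rewrite H2 in H3. eapply Rle_trans; [apply H|exact H3].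
Qed.
End Wedge.
Lemma lpos (k : nat) : 0 < INR k + 1.
Proof. pose proof (pos_INR k). lra. Qed.

Lemma up_nat (y : R) : 0 <= y -> y <= INR (Z.to_nat (up y)).
Proof.
  intros Hy. destruct (archimed y) as [H1 _].
  assert (Hz : (0 < up y)%Z) by (apply lt_0_IZR; lra).
  rewrite INR_IZR_INZ, Z2Nat.id by lia. lra.
Qed.

Theorem proposition1 :
  (forall (M : Metric_Space) (s : Base M),
      exists A : online_alg M, serves_all M s A /\ competitive M s A) ->
  exists rho : R, 1 <= rho /\
    forall (M : Metric_Space) (s : Base M),
      exists A : online_alg M, serves_all M s A /\ strictly_rho_competitive M s A rho.
Proof.
  intros Hyp.
  destruct (classic (exists n : nat, forall (M : Metric_Space) (s : Base M),
      exists A : online_alg M, serves_all M s A /\ strictly_rho_competitive M s A (INR n + 1)))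
    as [[n Hn]|Hno].
  { exists (INR n + 1). split; [pose proof (pos_INR n); lra|exact Hn]. }
  exfalso.
  assert (Hbad : forall n : nat, exists Ms : {M : Metric_Space & Base M},
     forall A : online_alg (projT1 Ms),
       ~ (serves_all (projT1 Ms) (projT2 Ms) A /\
          strictly_rho_competitive (projT1 Ms) (projT2 Ms) A (INR n + 1))).
  { intros n. apply NNPP; intros H. apply Hno. exists n. intros M s.
    apply NNPP; intros H2. apply H. exists (existT _ M s). simpl.
    intros A HA. apply H2. exists A. exact HA. }
  pose (Ms := fun n => proj1_sig (constructive_indefinite_description _ (Hbad n))).
  assert (HMs : forall n (A : online_alg (projT1 (Ms n))),
       ~ (serves_all (projT1 (Ms n)) (projT2 (Ms n)) A /\
          strictly_rho_competitive (projT1 (Ms n)) (projT2 (Ms n)) A (INR n + 1))).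
  { intros n. exact (proj2_sig (constructive_indefinite_description _ (Hbad n))). }
  pose (F := fun p : nat * nat => scaleM (projT1 (Ms (fst p))) (INR (snd p) + 1) (lpos (snd p))).
  pose (src := fun p : nat * nat => (projT2 (Ms (fst p)) : Base (F p))).
  destruct (Hyp (Wspace F src) None) as [A [HsA [rho [Hrho [cst Hb]]]]].
  pose (n := Z.to_nat (up rho)).
  assert (Hn : rho <= INR n) by (apply up_nat; lra).
  pose (M := projT1 (Ms n)). pose (s := projT2 (Ms n)).
  pose (Af := fun k : nat => (Ai F src A (n, k) : online_alg M)).
  assert (HAf : forall k, serves_all M s (Af k) /\
     forall sigma S, sched_valid M (init_config M s) sigma S ->
       alg_cost M s (Af k) sigma <= rho * sched_cost M (init_config M s) S + cst / (INR k + 1)).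
  { intros k. destruct (restrict F src A rho cst (n, k) HsA Hb) as [H1 H2].
    exact (unscale M (INR k + 1) (lpos k) s (Af k) rho cst H1 H2). }
  destruct (strictify M s Af rho cst ltac:(lra) (fun k => proj1 (HAf k)) (fun k => proj2 (HAf k)))
    as [HB1 HB2].
  apply (HMs n (B M s Af cst)). split; [exact HB1|].
  split; [pose proof (pos_INR n); lra|].
  intros sigma S HS. pose proof (HB2 sigma S HS) as H.
  pose proof (sched_cost_nonneg M (init_config M s) S) as Hc.
  assert (0 <= (INR n - rho) * sched_cost M (init_config M s) S) by (apply Rmult_le_pos; lra).
  unfold M, s in *. nra.
Qed.
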